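(* Let $R$ be an associative unital division ring over a field $F$ of characteristic $0$, let $\lambda\in F$, and let $\theta_{m,n}\in R$ be invertible for all $(m,n)\in\mathbb{Z}^2$. Define the $2\times2$ matrices $$\mathcal{L}_{m,n}=\begin{pmatrix}\lambda-\theta_{m+1,n}\theta_{m+2,n-1}^{-1}-\theta_{m+2,n}\theta_{m+1,n}^{-1} & -\theta_{m+1,n}\\ \theta_{m+1,n}^{-1} & 0\end{pmatrix},\qquad \mathcal{M}_{m,n}=\begin{pmatrix}1 & \theta_{m,n}\\ -\theta_{m+1,n-1}^{-1} & \lambda-\theta_{m+1,n-1}^{-1}\theta_{m,n}\end{pmatrix}.$$ If $\theta$ satisfies $\theta_{m+2,n}=\theta_{m,n+1}+\theta_{m+1,n}(\theta_{m,n}^{-1}-\theta_{m+2,n-1}^{-1})\theta_{m+1,n}$ for all $(m,n)$, then $\mathcal{L}_{m-1,n}\mathcal{M}_{m,n}=\mathcal{M}_{m,n+1}\mathcal{L}_{m,n}$ for all $(m,n)\in\mathbb{Z}^2$. *)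

(* Defs.v *)
From HB Require Import structures.
From mathcomp Require Import all_boot all_order all_algebra.
Set Implicit Arguments. Unset Strict Implicit. Unset Printing Implicit Defensive.
Import Order.TTheory GRing.Theory Num.Theory.
Local Open Scope ring_scope.

Definition mx2 (R : nzRingType) (a b c d : R) : 'M[R]_2 :=
  \matrix_(i < 2, j < 2)
    if i == 0 :> nat then (if j == 0 :> nat then a else b)
    else (if j == 0 :> nat then c else d).

Definition Lmx (F : fieldType) (R : unitAlgType F) (lam : F) (th : int -> int -> R)
  (m n : int) : 'M[R]_2 :=
  mx2 (lam%:A - th (m + 1) n * (th (m + 2) (n - 1))^-1
              - th (m + 2) n * (th (m + 1) n)^-1)
      (- th (m + 1) n)
      ((th (m + 1) n)^-1)
      0.

Definition Mmx (F : fieldType) (R : unitAlgType F) (lam : F) (th : int -> int -> R)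
  (m n : int) : 'M[R]_2 :=
  mx2 1 (th m n)
      (- (th (m + 1) (n - 1))^-1)
      (lam%:A - (th (m + 1) (n - 1))^-1 * th m n).

(* Main.v *)
Require Import Defs.
From HB Require Import structures.
From mathcomp Require Import all_boot all_order all_algebra.
Import Order.TTheory GRing.Theory Num.Theory.
Local Open Scope ring_scope.

Lemma aux (V : zmodType) (a b c d : V) : - (a - c) + (b + (d - c)) + (a - b) = d.
Proof.
by rewrite opprB addrCA addrA (addrC c) -[- a + c + _]addrA addNKr addrCA addrC addKr addrC subrK.
Qed.

Theorem proposition4p2 (F : fieldType) (R : unitAlgType F)
  (charF0 : [pchar F] =i pred0)
  (divR : forall x : R, x != 0 -> x \is a GRing.unit)
  (lam : F) (th : int -> int -> R)
  (th_unit : forall m n, th m n \is a GRing.unit)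
  (th_eq : forall m n,
     th (m + 2) n = th m (n + 1)
       + th (m + 1) n * ((th m n)^-1 - (th (m + 2) (n - 1))^-1) * th (m + 1) n) :
  forall m n : int,
    Lmx lam th (m - 1) n *m Mmx lam th m n = Mmx lam th m (n + 1) *m Lmx lam th m n.
Proof.
move=> m n.
have E := th_eq m n.
have e1 : m - 1 + 1 = m by rewrite subrK.
have e2 : m - 1 + 2 = m + 1 by rewrite -addrA.
have e3 : n + 1 - 1 = n by rewrite addrK.
rewrite /Lmx /Mmx e1 e2 e3.
have U0 := th_unit m n. have U1 := th_unit (m+1) n. have U2 := th_unit (m+1) (n-1).
have lC : forall x : R, lam%:A * x = x * lam%:A.
  by move=> x; rewrite -scalerAl mul1r -scalerAr mulr1.
move: E U0 U1 U2.
set t := th m n; set u := th (m+1) n; set v := th (m+1) (n-1); set w := th (m+2) n;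
set z := th (m+2) (n-1); set y := th m (n+1) => E U0 U1 U2.
apply/matrixP => i j; rewrite !mxE !big_ord_recl !big_ord0 !addr0 !mxE /=.
case: i => [[|[|//]] ?]; case: j => [[|[|//]] ?] /=.
- rewrite mulr1 mul1r mulrNN E mulrDl mulrK // mulrBr addrAC subrK.
  by rewrite opprD opprB addrA addrAC subrK addrA subrK.
- by rewrite mul1r mulr0 addr0 !mulrBl mulrBr !mulNr divrK // -mulrA lC opprK addrAC addrACA subrr addNr !add0r.
- by rewrite mulr1 mul0r addr0 E mulrDl mulrK // mulrBr !mulNr !opprK mulrDr !mulrBr mulrBl !mulrN !mulrDr !mulrN !mulKr // -lC !mulrA aux.
- by rewrite mulVr // mul0r mulr0 !addr0 mulNr mulrN opprK mulVr.
Qed.
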